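(* Let $p$ be an odd prime, $k$ algebraically closed of characteristic $p$, $d=p^2-1$, and let $X$ be the Artin–Schreier curve $y^p-y=-x^{d}-x^{d/2}$ over $k$. For every $\alpha=y^mx^ndx\in\mathcal B_X$ with $m\ge\frac{p-1}{2}$, we have $\mathcal C_X(\alpha)\notin\operatorname{Span}(\mathcal C_X(\mathcal B_\alpha))$.
   Context: $\mathcal C_X$ is the Cartier operator on $H^0(X,\Omega^1_X)$: the $p^{-1}$-semilinear map with $\mathcal C_X(f^p\alpha+\beta)=f\,\mathcal C_X(\alpha)+\mathcal C_X(\beta)$, $\mathcal C_X(x^{p-1}dx)=dx$, $\mathcal C_X(x^ndx)=0$ for $n\not\equiv-1\pmod p$. For an Artin–Schreier curve $y^p-y=f$ with $f\in k[x]$ of degree $D$ prime to $p$, the set $$\mathcal B_X=\left\{y^ix^jdx:\ 0\le i\le p-2,\ 0\le j\le \left\lceil\tfrac{(p-i-1)D}{p}\right\rceil-2\right\}$$ is a $k$-basis of $H^0(X,\Omega^1_X)$. Order $\mathcal B_X$ lexicographically with $y>x$: $y^ix^jdx>y^ax^bdx$ iff $i>a$, or $i=a$ and $j>b$. For $\alpha\in\mathcal B_X$, $\mathcal B_\alpha=\{\beta\in\mathcal B_X:\beta<\alpha\}$, and for a set $A$ of differentials, $\operatorname{Span}(\mathcal C_X(A))$ is the $k$-span of $\{\mathcal C_X(a):a\in A\}$. *)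

(* Defs.v *)
From mathcomp Require Import all_boot all_order all_algebra.
Set Implicit Arguments. Unset Strict Implicit. Unset Printing Implicit Defensive.
Import GRing.Theory.
Local Open Scope ring_scope.

(* The Artin-Schreier curve X : y^p - y = f(x), f = -x^d - x^(d/2), d = p^2-1.
   Regular differentials h dx are represented by h in the coordinate ring
   A = k[x][y]/(y^p - y - f), which is free over k[x] with basis 1,y,..,y^(p-1);
   we represent h by its unique representative in {poly {poly k}}
   (outer variable y, inner variable x) of y-degree < p.  The monomial
   y^t x^q is  ('X^q)%:P * 'X^t. *)

Section AS.
Variable k : fieldType.
Variable p : nat.

Definition ASd : nat := (p ^ 2 - 1)%N.

Definition ASf : {poly k} := - 'X^ASd - 'X^(ASd %/ 2).

(* Cartier operator on k[x] dx for polynomials with coefficients in the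
   prime field F_p (so that the p^(-1)-semilinearity is invisible):
   C(sum_n c_n x^n dx) = sum_q c_(pq+p-1) x^q dx, which is exactly what the
   rules C(x^(p-1) dx) = dx, C(x^n dx) = 0 for n <> -1 mod p and
   C(g^p a + b) = g C(a) + C(b) give. *)
Definition cartier_x (g : {poly k}) : {poly k} :=
  \poly_(q < size g) g`_(p * q + (p - 1)).

(* Cartier operator of X on the monomial differential y^i x^j dx:
   write y = y^p - f, so y^i = sum_t binom(i,t) (y^t)^p (-f)^(i-t), hence
   C(y^i x^j dx) = sum_t binom(i,t) y^t C((-f)^(i-t) x^j dx)
   (binomials and the coefficients of f lie in F_p). *)
Definition cartier (i j : nat) : {poly {poly k}} :=
  \sum_(t < i.+1)
     ((('C(i, t))%:R *: cartier_x ((- ASf) ^+ (i - t) * 'X^j))%:P * 'X^t).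

Definition inB (i j : nat) : bool :=
  (i <= p - 2)%N && (j + 2 <= ((p - i - 1) * ASd + p - 1) %/ p)%N.

Definition lexlt (a b m n : nat) : bool :=
  (a < m)%N || ((a == m) && (b < n)%N).

(* C(y^m x^n dx) lies in the k-span of C(B_alpha), alpha = y^m x^n dx.
   (Every element of B_X has i < p and j < p^2, so the sum ranges over
   all of B_alpha.) *)
Definition in_span_C_below (m n : nat) : Prop :=
  exists c : nat -> nat -> k,
    cartier m n =
    \sum_(a < p) \sum_(b < p ^ 2)
       (if inB a b && lexlt a b m n then (c a b)%:P%:P * cartier a b else 0).

End AS.

(* Main.v *)
Require Import Defs.
From mathcomp Require Import all_boot all_order all_algebra.
From mathcomp Require Import zify.
Import GRing.Theory.


Lemma aux1 w u : 1 <= w -> 2 <= u -> 2*(w + u) <= (2*w+1)*(2*u - 1).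
Proof. move=> Hw Hu; have -> : u = (u - 2) + 2 by lia. nia. Qed.

Lemma arith_zero (w h n m a b r kk s t l : nat) :
 h = 2*w*(w+1) -> 1 <= w ->
 2*(n+1) = kk*(2*w+1) + r -> r < 2*w+1 ->
 (r = s + s \/ r + 1 = s + s) ->
 w <= m -> m <= 2*w - 1 ->
 (2*w+1)*(n+2) <= (2*w - m)*(2*h) + 2*w ->
 (a < m \/ (a = m /\ b < n)) ->
 (2*w+1)*(b+2) <= (2*w - a)*(2*h) + 2*w ->
 t + s = m -> t <= a -> l <= a - t ->
 h*((a - t) + l) + b <> h*r + n.
Proof.
move=> Hh Hw Hn Hr Hs Hwm Hm2 HnB Hlt HbB Hts Hta Hl Heq.
have Hwm' : 2*w - m <= w by lia.
have H1 : (2*w - m)*(2*h) <= w*(2*h) by apply: leq_mul.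
have Hnh : n + 2 <= h.
  have : (2*w+1)*(n+2) < (2*w+1)*(h+1) by lia.
  by rewrite ltn_pmul2l; lia.
case: Hlt => [Ham | [Ham Hbn]].
- set u := m - a.
  have Hu : 1 <= u by lia.
  set sg := a - t + l.
  have Hsg : sg + 2*u <= 2 * s by lia.
  have Hrs : 2*s <= r + 1 by lia.
  set dl := r - sg.
  have Hd : r = sg + dl by lia.
  have Hb : b = n + h * dl.
    rewrite Hd mulnDr in Heq; lia.
  have Hdl : 2*u <= dl + 1 by lia.
  have HA : 2*w - a = 2*w - m + u by lia.
  rewrite HA Hb in HbB.
  case: (ltnP 1 dl) => Hd2.
  + have H3 : (2*w - m + u) * (2*h) <= (2*w+1)*(h*dl).
      have H4 : (2*w - m + u) * (2*h) <= (w + u) * (2*h) by apply: leq_mul; lia.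
      apply: (leq_trans H4).
      case: (ltnP 1 u) => Hu2.
      * have H5 := @aux1 w u Hw Hu2.
        have H6 : (2*w+1)*(2*u-1) <= (2*w+1)*dl by apply: leq_mul; lia.
        have H7 : 2*(w+u)*h <= (2*w+1)*dl*h by apply: leq_mul => //; lia.
        move: H7; rewrite !mulnA; lia.
      * have Hu1 : u = 1 by lia.
        rewrite Hu1.
        have H6 : (2*w+1)*2 <= (2*w+1)*dl by apply: leq_mul.
        have H7 : (2*w+1)*2*h <= (2*w+1)*dl*h by apply: leq_mul.
        move: H7; rewrite !mulnA; lia.
    lia.
  + have Hd1 : dl = 1 by lia.
    have Hu1 : u = 1 by lia.
    have Hk : 1 <= kk.
      case: kk Hn => [|kk'] Hn'; last by [].
      lia.
    have Hnw : w <= n.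
      have : 2*w+1 <= kk*(2*w+1) by rewrite leq_pmull.
      lia.
    rewrite Hd1 Hu1 in HbB.
    have H8 : (2*w - m + 1) * (2*h) <= (w + 1)*(2*h) by apply: leq_mul; lia.
    have H9 : (2*w+1)*(w+2) <= (2*w+1)*(n+2) by apply: leq_mul; lia.
    clear -Hh H8 H9 HbB; lia.
- subst a.
  have Hta' : m - t = s by lia.
  rewrite Hta' in Hl Heq.
  case: (leqP (s + l) r) => Hsl.
  + have : h * (s + l) <= h * r by apply: leq_mul.
    lia.
  + have : h * (r + 1) <= h * (s + l) by apply: leq_mul => //; rewrite addn1.
    lia.
Qed.


Lemma not_dvd_fact p a : prime p -> (a < p)%N -> ~~ (p %| a`!)%N.
Proof.
move=> hp; elim: a => [|a IH] Ha.
  by rewrite fact0 dvdn1; apply/eqP => H1; move: (prime_gt1 hp); rewrite H1.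
rewrite factS Euclid_dvdM // negb_or IH ?andbT; last by lia.
by apply/negP => /dvdn_leq; lia.
Qed.

Lemma not_dvd_bin p a b : prime p -> (a < p)%N -> (b <= a)%N -> ~~ (p %| 'C(a, b))%N.
Proof.
move=> hp Ha Hb; apply/negP => H.
have := @not_dvd_fact p a hp Ha; rewrite -(bin_fact Hb).
by rewrite dvdn_mulr.
Qed.

Lemma conv_bound (w h x y p : nat) : p = (2 * w + 1)%N ->
  ((x + 2) * p <= (p - y - 1) * (h * 2) + p - 1)%N ->
  ((2 * w + 1) * (x + 2) <= (2 * w - y) * (2 * h) + 2 * w)%N.
Proof.
move=> ->.
have -> : 2*w+1-y-1 = 2*w-y by lia.
rewrite (mulnC h 2) mulnC; lia.
Qed.

Local Open Scope ring_scope.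

Section Poly.
Variable k : fieldType.
Variable p : nat.
Hypothesis p_gt0 : (0 < p)%N.
Let h := (ASd p %/ 2)%N.
Hypothesis hd : ASd p = (h * 2)%N.

Lemma negf : - ASf k p = 'X^h + 'X^(ASd p).
Proof. by rewrite /ASf opprD !opprK addrC. Qed.

Lemma coef_pow s j E : ((- ASf k p) ^+ s * 'X^j)`_E =
  \sum_(l < s.+1) ('C(s,l) * (E == h * (s + l) + j)%N)%:R.
Proof.
rewrite negf exprDn mulr_suml coef_sum; apply: eq_bigr => l _.
rewrite -!exprM -exprD mulrnAl -exprD coefMn coefXn natrM mulr_natl.
have -> : (h * (s - l) + ASd p * l + j = h * (s + l) + j)%N.
  have := ltn_ord l; rewrite hd; nia.
by [].
Qed.

Lemma coef_cartier_x (g : {poly k}) q : (cartier_x p g)`_q = g`_(p * q + (p - 1)).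
Proof.
rewrite coef_poly; case: ltnP => // H; rewrite nth_default //.
apply: (leq_trans H); nia.
Qed.

Lemma coef_cartier_y i j t : (cartier k p i j)`_t =
  if (t <= i)%N then 'C(i,t)%:R *: cartier_x p ((- ASf k p) ^+ (i - t) * 'X^j) else 0.
Proof.
rewrite /cartier coef_sum.
under eq_bigr => t' _ do rewrite coefCM coefXn.
case: leqP => Ht.
  have Hti : (t < i.+1)%N by [].
  rewrite (bigD1 (Ordinal Hti)) //= eqxx mulr1 big1 ?addr0 //.
  move=> t' /negbTE Ht'; rewrite eqE /= in Ht'.
  by rewrite eq_sym Ht' mulr0.
rewrite big1 // => t' _.
have : (t' < t)%N by apply: leq_trans (ltn_ord t') _.
by rewrite ltn_neqAle eq_sym => /andP[/negbTE -> _]; rewrite mulr0.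
Qed.
Lemma coef_cartier i j t q : ((cartier k p i j)`_t)`_q =
  if (t <= i)%N then 'C(i,t)%:R *
     \sum_(l < (i - t).+1) ('C(i - t,l) * (p * q + (p - 1) == h * (i - t + l) + j)%N)%:R
  else 0.
Proof.
rewrite coef_cartier_y; case: ifP => _; last by rewrite coef0.
by rewrite coefZ coef_cartier_x coef_pow.
Qed.
End Poly.


Theorem mainTheorem9 (k : closedFieldType) (p : nat)
  (hp : prime p) (hodd : odd p) (hchar : p \in [pchar k])
  (m n : nat) (hB : inB p m n) (hm : ((p - 1)./2 <= m)%N) :
  ~ @in_span_C_below k p m n.
Proof.
have p_gt1 := prime_gt1 hp.
have p_gt0 : (0 < p)%N by lia.
set w := p./2.
have Hp : p = (2*w+1)%N.
  by move: (odd_double_half p); rewrite hodd -addnn /=; lia.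
have Hw : (1 <= w)%N by lia.
have Hpm1 : (p-1)./2 = w.
  have -> : (p - 1 = w.*2)%N by rewrite -muln2; lia.
  by rewrite doubleK.
rewrite Hpm1 in hm.
set h := (ASd p %/ 2)%N.
have Hh : h = (2*w*(w+1))%N.
  rewrite /h /ASd Hp.
  have -> : ((2*w+1)^2 - 1 = (2*w*(w+1)) * 2)%N by rewrite expnS expn1; nia.
  by rewrite mulnK.
have HASd : ASd p = (h * 2)%N by rewrite /ASd Hh Hp expnS expn1; nia.
move: hB => /andP[Hm2 HnB].
rewrite leq_divRL // in HnB.
have HnB' : ((2*w+1)*(n+2) <= (2*w - m)*(2*h) + 2*w)%N.
  by apply: conv_bound Hp _; rewrite -HASd.
have Hm2' : (m <= 2*w - 1)%N by lia.
set r := ((2*(n+1)) %% p)%N.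
set kk := ((2*(n+1)) %/ p)%N.
have Hn : (2*(n+1) = kk*(2*w+1) + r)%N by rewrite /kk /r -Hp -divn_eq.
have Hr : (r < 2*w+1)%N by rewrite -Hp ltn_pmod.
set s := (r.+1)./2.
have Hs : (r = s + s \/ r + 1 = s + s)%N.
  move: (odd_double_half r.+1); rewrite -addnn; case: (odd r.+1) => /=; lia.
have Hsw : (s <= w)%N by lia.
set t0 := (m - s)%N.
have Hts : (t0 + s = m)%N by lia.
set l0 := (r - s)%N.
set X := (h*r + n + 1)%N.
have HdX : (p %| X)%N.
  have H2 : (2 * X = p * (p*r + kk))%N by rewrite /X Hp Hh; clear -Hn; lia.
  by rewrite -(@Gauss_dvdr p 2 X) ?coprimen2 // H2 dvdn_mulr.
set Y := (X %/ p)%N.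
have HY : (Y * p = X)%N by rewrite divnK.
have HY1 : (1 <= Y)%N by case: (Y) HY => //; rewrite mul0n /X addn1.
set q0 := (Y - 1)%N.
have Hq : (p*q0 + (p-1) = h*r + n)%N.
  rewrite /q0 mulnBr muln1.
  have HpY : (p <= p*Y)%N by apply: leq_pmulr.
  rewrite mulnC HY /X in HpY *.
  clear -HpY p_gt0; lia.
move=> [c Hc].
have := congr1 (fun P : {poly {poly k}} => (P`_t0)`_q0) Hc.
rewrite /= (coef_cartier _ _ p_gt0 HASd).
have Hsm : (s <= m)%N by apply: leq_trans hm.
rewrite /t0 leq_subr subKn //.
rewrite Hq.
have Hl0 : (l0 < s.+1)%N by rewrite /l0; clear -Hs; lia.
rewrite (bigD1 (Ordinal Hl0)) //= big1; last first.
  move=> l /negbTE Hl; rewrite eqE /= in Hl.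
  suff -> : (h * r + n == h * (s + l) + n)%N = false by rewrite muln0.
  apply/negbTE; rewrite eqn_add2r eqn_pmul2l; last by rewrite Hh; clear -Hw; lia.
  by apply/eqP => E; move/eqP: Hl; apply; rewrite /l0 E; clear; lia.
have -> : (h * r + n == h * (s + l0) + n)%N by apply/eqP; rewrite /l0; congr (_ + _)%N; congr (_ * _)%N; clear -Hs; lia.
rewrite muln1 addr0.
have SE : forall (I : finType) (G : I -> {poly {poly k}}),
   ((\sum_(a : I) G a)`_t0)`_q0 = \sum_(a : I) ((G a)`_t0)`_q0.
  by move=> I G; rewrite !coef_sum.
rewrite SE big1; last first.
  move=> a _; rewrite SE big1 // => b _.
  case: ifP => [/andP[/andP[Ha2 HbB] Hlex]|_]; last by rewrite !coef0.
  rewrite !coefCM -/t0 (coef_cartier _ _ p_gt0 HASd); case: ifP => Hta; last by rewrite mulr0.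
  rewrite big1 ?mulr0 // => l _.
  suff -> : (p * q0 + (p - 1) == h * (a - t0 + l) + b)%N = false by rewrite muln0.
  apply/negbTE/eqP; rewrite Hq => /esym.
  have Hlt : ((a < m)%N \/ (a = m :> nat /\ (b < n)%N)).
    move: Hlex; rewrite /lexlt => /orP[->|/andP[/eqP -> ->]]; by [left | right].
  have HbB' : ((2*w+1)*(b+2) <= (2*w - a)*(2*h) + 2*w)%N.
    by apply: conv_bound Hp _; rewrite -HASd -leq_divRL.
  have Hl : (l <= a - t0)%N by rewrite -ltnS.
  apply: (@arith_zero w h n m a b r kk s t0 l Hh Hw Hn Hr Hs hm Hm2' HnB' Hlt HbB' Hts _ Hl).
  by rewrite Hta.
apply/eqP; rewrite -natrM -(dvdn_pcharf hchar) Euclid_dvdM // negb_or.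
rewrite !not_dvd_bin // ?leq_subr; try by [].
all: rewrite Hp; clear -Hsw Hm2' Hw; lia.
Qed.
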